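(* Let $k\in\mathbb{Z}$, let $n$ be a positive integer and let $m$ be an odd positive integer. Then $$E_{n-1}^{(k)}(x)=\sum_{l=0}^{n-1}\binom{n-1}{l}m^{l}\sum_{j=1}^{n-l}\sum_{s=0}^{m-1}(-1)^sE_{l}\Big(\frac{s+x}{m}\Big)\frac{1}{j^{k-1}}\frac{S_{1}(n-l,j)}{n-l}.$$
   Context: Euler polynomials $E_n(x)$ are defined by $\frac{2}{e^t+1}e^{xt}=\sum_{n=0}^{\infty}E_n(x)\frac{t^n}{n!}$. For $k\in\mathbb{Z}$, $\mathrm{Ei}_k(x)=\sum_{n=1}^{\infty}\frac{x^n}{n^k(n-1)!}$; the poly-Genocchi polynomials $G_n^{(k)}(x)$ are defined by $\frac{2\,\mathrm{Ei}_k(\log(1+t))}{e^t+1}e^{xt}=\sum_{n=0}^{\infty}G_n^{(k)}(x)\frac{t^n}{n!}$, and the poly-Euler polynomials are $E_n^{(k)}(x)=\frac{G_{n+1}^{(k)}(x)}{n+1}$ ($n\ge0$). $S_1(n,m)$ are the signed Stirling numbers of the first kind: $\frac{(\log(1+t))^m}{m!}=\sum_{n=m}^{\infty}S_1(n,m)\frac{t^n}{n!}$. *)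

(* Defs.v *)
(* Formal power series over a number field R are represented
   by their coefficient sequences nat -> R. *)
From mathcomp Require Import all_boot all_order all_algebra.
Set Implicit Arguments. Unset Strict Implicit. Unset Printing Implicit Defensive.
Import Order.TTheory GRing.Theory Num.Theory.
Local Open Scope ring_scope.

Section FPS.
Variable R : numFieldType.
Implicit Types (f g : nat -> R).

Definition ps_one : nat -> R := fun n => (n == 0%N)%:R.
Definition ps_mul f g : nat -> R :=
  fun n => \sum_(i < n.+1) f i * g (n - i)%N.
Fixpoint ps_pow f (i : nat) : nat -> R :=
  match i with 0%N => ps_one | i'.+1 => ps_mul f (ps_pow f i') end.
(* composition f(g(t)), meaningful when g 0 = 0 *)
Definition ps_comp f g : nat -> R :=
  fun n => \sum_(i < n.+1) f i * ps_pow g i n.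
Definition ps_scale (c : R) f : nat -> R := fun n => c * f n.
Definition ps_add f g : nat -> R := fun n => f n + g n.

(* multiplicative inverse of a series with f 0 != 0 *)
Fixpoint ps_inv_list f (n : nat) : seq R :=
  match n with
  | 0%N => [:: (f 0%N)^-1]
  | n'.+1 => let s := ps_inv_list f n' in
      rcons s (- (f 0%N)^-1 *
               \sum_(1 <= i < n'.+2) f i * nth 0 s (n'.+1 - i)%N)
  end.
Definition ps_inv f : nat -> R := fun n => nth 0 (ps_inv_list f n) n.

Definition ps_expa (a : R) : nat -> R := fun n => a ^+ n / n`!%:R.
Definition ps_log1p : nat -> R :=
  fun n => if n is n'.+1 then (-1) ^+ n' / n%:R else 0.
Definition ps_Ei (k : int) : nat -> R :=
  fun n => if n is n'.+1 then ((n%:R ^ k) * n'`!%:R)^-1 else 0.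

Definition ps_euler_factor : nat -> R :=
  ps_scale 2 (ps_inv (ps_add (ps_expa 1) ps_one)).

(* Euler polynomials: 2/(e^t+1) e^{xt} = sum E_n(x) t^n/n! *)
Definition euler_poly (n : nat) (x : R) : R :=
  n`!%:R * ps_mul ps_euler_factor (ps_expa x) n.

(* poly-Genocchi: 2 Ei_k(log(1+t))/(e^t+1) e^{xt} = sum G_n^(k)(x) t^n/n! *)
Definition poly_genocchi (k : int) (n : nat) (x : R) : R :=
  n`!%:R * ps_mul (ps_mul (ps_comp (ps_Ei k) ps_log1p) ps_euler_factor)
                  (ps_expa x) n.

Definition poly_euler (k : int) (n : nat) (x : R) : R :=
  poly_genocchi k n.+1 x / n.+1%:R.

(* signed Stirling numbers of the first kind:
   (log(1+t))^m/m! = sum_{n} S1(n,m) t^n/n!  (values in R) *)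
Definition stirling1 (n m : nat) : R :=
  n`!%:R * ps_pow ps_log1p m n / m`!%:R.
End FPS.

(* Main.v *)
Require Import Defs.
From mathcomp Require Import all_boot all_order all_algebra.
From mathcomp Require Import ring lra zify.
Import Order.TTheory GRing.Theory Num.Theory.
Local Open Scope ring_scope.
Set Implicit Arguments. Unset Strict Implicit.

Section Aux.
Variable R : numFieldType.
Implicit Types (f g h : nat -> R) (p q : {poly R}).

Lemma fact_neq0 n : (n`!%:R : R) != 0.
Proof. by rewrite pnatr_eq0 -lt0n fact_gt0. Qed.
Lemma natS_neq0 n : (n.+1%:R : R) != 0.
Proof. by rewrite pnatr_eq0. Qed.

Section Trunc.
Variable N : nat.
Definition eqN p q := forall i, (i < N)%N -> p`_i = q`_i.
Definition tr f : {poly R} := \poly_(i < N) f i.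

Lemma eqN_sym p q : eqN p q -> eqN q p. Proof. by move=> h i hi; rewrite h. Qed.
Lemma eqN_trans p q r : eqN p q -> eqN q r -> eqN p r.
Proof. by move=> h1 h2 i hi; rewrite h1 // h2. Qed.
Lemma eqN_eq p q : p = q -> eqN p q. Proof. by move=> ->. Qed.
Lemma eqN_add p p' q q' : eqN p p' -> eqN q q' -> eqN (p + q) (p' + q').
Proof. by move=> h1 h2 i hi; rewrite !coefD h1 // h2. Qed.
Lemma eqN_mul p p' q q' : eqN p p' -> eqN q q' -> eqN (p * q) (p' * q').
Proof.
move=> h1 h2 i hi; rewrite !coefM; apply: eq_bigr => j _.
have hj : (j < N)%N by have := ltn_ord j; lia.
have hij : (i - j < N)%N by lia.
by rewrite h1 // h2.
Qed.
Lemma eqN_scale c p p' : eqN p p' -> eqN (c *: p) (c *: p').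
Proof. by move=> h i hi; rewrite !coefZ h. Qed.

Lemma coef_tr f i : (i < N)%N -> (tr f)`_i = f i.
Proof. by move=> hi; rewrite coef_poly hi. Qed.

Lemma tr_ext f g : (forall i, (i < N)%N -> f i = g i) -> eqN (tr f) (tr g).
Proof. by move=> h i hi; rewrite !coef_tr // h. Qed.

Lemma tr_mul f g : eqN (tr (ps_mul f g)) (tr f * tr g).
Proof.
move=> i hi; rewrite coef_tr // coefM /ps_mul; apply: eq_bigr => j _.
have hj : (j < N)%N by have := ltn_ord j; lia.
have hij : (i - j < N)%N by lia.
by rewrite !coef_tr.
Qed.

Lemma tr_add f g : eqN (tr (ps_add f g)) (tr f + tr g).
Proof. by move=> i hi; rewrite coefD !coef_tr. Qed.

Lemma tr_scale c f : eqN (tr (ps_scale c f)) (c *: tr f).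
Proof. by move=> i hi; rewrite coefZ !coef_tr. Qed.

Lemma tr_one : eqN (tr (ps_one R)) 1.
Proof. by move=> i hi; rewrite coef_tr // coef1. Qed.

Lemma tr_pow f i : eqN (tr (ps_pow f i)) (tr f ^+ i).
Proof.
elim: i => [|i IH] /=; first exact: tr_one.
rewrite exprS.
exact: (eqN_trans (tr_mul _ _) (eqN_mul (eqN_eq (erefl _)) IH)).
Qed.
End Trunc.

Lemma mul_coef_tr f g n : ps_mul f g n = (tr n.+1 f * tr n.+1 g)`_n.
Proof. by have := tr_mul (N:=n.+1) f g (ltnSn n); rewrite coef_tr. Qed.

Lemma ps_mulC f g n : ps_mul f g n = ps_mul g f n.
Proof. by rewrite !mul_coef_tr mulrC. Qed.

Lemma ps_mulACA f g h n : ps_mul (ps_mul f g) h n = ps_mul (ps_mul g h) f n.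
Proof.
have e1 := tr_mul (N:=n.+1) (ps_mul f g) h (ltnSn n).
have e2 := tr_mul (N:=n.+1) (ps_mul g h) f (ltnSn n).
rewrite !coef_tr // in e1 e2; rewrite e1 e2.
have e3 := eqN_mul (tr_mul (N:=n.+1) f g) (eqN_eq (erefl (tr n.+1 h))) (ltnSn n).
have e4 := eqN_mul (tr_mul (N:=n.+1) g h) (eqN_eq (erefl (tr n.+1 f))) (ltnSn n).
by rewrite e3 e4 [tr n.+1 g * _ * _]mulrC mulrA.
Qed.

Lemma expa_add (a b : R) n : ps_mul (ps_expa a) (ps_expa b) n = ps_expa (a + b) n.
Proof.
rewrite /ps_mul /ps_expa addrC exprDn mulr_suml; apply: eq_bigr => i _.
have hi : (i <= n)%N by have := ltn_ord i; lia.
have hC : ('C(n, i)%:R : R) != 0 by rewrite pnatr_eq0 -lt0n bin_gt0.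
rewrite -(bin_fact hi) !natrM mulr_natr.
have h1 := fact_neq0 i; have h2 := fact_neq0 (n - i).
by field; rewrite hC h1 h2.
Qed.

Lemma inv_list_size f n : size (ps_inv_list f n) = n.+1.
Proof. by elim: n => [|n IH] //=; rewrite size_rcons IH. Qed.

Lemma inv_list_nth f n i : (i <= n)%N -> nth 0 (ps_inv_list f n) i = ps_inv f i.
Proof.
elim: n => [|n IH] hi; first by move: hi; rewrite leqn0 => /eqP ->.
rewrite leq_eqVlt in hi; case/orP: hi => [/eqP -> //|hi].
by rewrite /= nth_rcons inv_list_size hi IH.
Qed.

Lemma ps_inv_S f n : ps_inv f n.+1 =
  - (f 0%N)^-1 * \sum_(i < n.+1) f i.+1 * ps_inv f (n - i).
Proof.
rewrite /ps_inv /= nth_rcons inv_list_size ltnn eqxx.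
congr (_ * _); rewrite big_add1 /= big_mkord; apply: eq_bigr => i _.
by rewrite subSS inv_list_nth // leq_subr.
Qed.

Lemma ps_inv_spec f n : f 0%N != 0 -> ps_mul f (ps_inv f) n = ps_one R n.
Proof.
move=> hf; case: n => [|n].
  by rewrite /ps_mul big_ord1 /ps_inv /= mulfV.
rewrite /ps_mul big_ord_recl /= subn0 ps_inv_S /ps_one /=.
rewrite mulrA mulrN mulfV // mulN1r.
have -> : \sum_(i < n.+1) f (bump 0 i) * ps_inv f (n.+1 - bump 0 i)
        = \sum_(i < n.+1) f i.+1 * ps_inv f (n - i).
  by apply: eq_bigr => i _; rewrite /bump /= add1n subSS.
by rewrite addNr.
Qed.

Definition ps_dil (c : R) f : nat -> R := fun n => c ^+ n * f n.

Lemma dil_mul c f g n : ps_mul (ps_dil c f) (ps_dil c g) n = ps_dil c (ps_mul f g) n.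
Proof.
rewrite /ps_mul /ps_dil mulr_sumr; apply: eq_bigr => i _.
have hi : (i <= n)%N by have := ltn_ord i; lia.
have -> : c ^+ n = c ^+ i * c ^+ (n - i) by rewrite -exprD subnKC.
ring.
Qed.

Lemma dil_expa c a n : ps_dil c (ps_expa a) n = ps_expa (c * a) n.
Proof. by rewrite /ps_dil /ps_expa exprMn mulrA. Qed.

Lemma dil_one c n : ps_dil c (ps_one R) n = ps_one R n.
Proof. by case: n => [|n]; rewrite /ps_dil /ps_one /= ?expr0 ?mul1r ?mulr0. Qed.

Lemma tr_expa_add N (a b : R) :
  eqN N (tr N (ps_expa (a + b))) (tr N (ps_expa a) * tr N (ps_expa b)).
Proof.
refine (eqN_trans _ (tr_mul (N:=N) _ _)).
by apply: tr_ext => i _; rewrite expa_add.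
Qed.

Lemma tr_expa_nat N (s : nat) :
  eqN N (tr N (ps_expa (s%:R : R))) (tr N (ps_expa 1) ^+ s).
Proof.
elim: s => [|s IH].
  refine (eqN_trans _ (@tr_one N)); apply: tr_ext => i _.
  by rewrite /ps_expa /ps_one expr0n; case: i => [|i] //=; rewrite ?mul0r // divr1.
rewrite -addn1 natrD exprD expr1.
exact: (eqN_trans (tr_expa_add (N:=N) _ _) (eqN_mul IH (eqN_eq (erefl _)))).
Qed.

Lemma geom_sum (u : {poly R}) m :
  (\sum_(s < m) (-1) ^+ s *: u ^+ s) * (u + 1) = 1 - (-1) ^+ m *: u ^+ m.
Proof.
elim: m => [|m IH]; first by rewrite big_ord0 mul0r expr0 scale1r expr0 subrr.
rewrite big_ord_recr /= mulrDl IH exprS exprSr mulN1r scaleNr opprK.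
rewrite -scalerAl mulrDr mulr1 scalerDr.
set a := _ *: u ^+ m; set b := _ *: (u ^+ m * u).
by rewrite [b + a]addrC addrA subrK.
Qed.

Definition gden : nat -> R := ps_add (ps_expa 1) (ps_one R).

Lemma ps_mul_ext f g g' n : (forall i, g i = g' i) -> ps_mul f g n = ps_mul f g' n.
Proof. by move=> h; apply: eq_bigr => i _; rewrite h. Qed.

Lemma two_neq0 : (1 + 1 : R) != 0.
Proof. by rewrite -mulr2n pnatr_eq0. Qed.

Lemma EF_spec n : ps_mul (ps_euler_factor R) gden n = ps_scale 2 (ps_one R) n.
Proof.
rewrite /ps_euler_factor /ps_scale.
have -> : ps_mul (fun n => 2 * ps_inv gden n) gden n = 2 * ps_mul (ps_inv gden) gden n.
  by rewrite /ps_mul mulr_sumr; apply: eq_bigr => i _; rewrite mulrA.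
rewrite ps_mulC ps_inv_spec //.
by rewrite /gden /ps_add /ps_expa /ps_one /= expr0 divr1 two_neq0.
Qed.

Lemma F_spec (c : R) n :
  ps_mul (ps_dil c (ps_euler_factor R)) (ps_add (ps_expa c) (ps_one R)) n
  = ps_scale 2 (ps_one R) n.
Proof.
rewrite (@ps_mul_ext _ _ (ps_dil c gden)); last first.
  move=> i; rewrite /ps_dil /gden /ps_add mulrDr -/(ps_dil c (ps_expa 1) i).
  by rewrite dil_expa mulr1 -/(ps_dil c (ps_one R) i) dil_one.
rewrite dil_mul /ps_dil EF_spec /ps_scale /ps_one.
by case: n => [|n] /=; rewrite ?expr0 ?mul1r // !mulr0.
Qed.

Lemma mult_thm (m : nat) (x : R) l : odd m ->
  (m%:R : R) ^+ l * \sum_(s < m) (-1) ^+ s * euler_poly l ((s%:R + x) / m%:R)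
  = euler_poly l x.
Proof.
move=> hm.
have m0 : (m%:R : R) != 0 by rewrite pnatr_eq0; case: m hm.
set N := l.+1.
set EF := ps_euler_factor R.
set Fs := ps_dil m%:R EF.
set P := tr N (ps_expa 1); set E := tr N EF; set F := tr N Fs.
set X := tr N (ps_expa x).
set S := \sum_(s < m) (-1) ^+ s *: P ^+ s.
have hg : eqN N (tr N gden) (P + 1) := eqN_trans (tr_add _ _) (eqN_add (eqN_eq (erefl P)) (@tr_one N)).
have hE : eqN N (E * (P + 1)) (2 *: 1).
  refine (eqN_trans (eqN_mul (eqN_eq (erefl E)) (eqN_sym hg)) _).
  refine (eqN_trans (eqN_sym (tr_mul _ _)) _).
  refine (eqN_trans (tr_ext (fun i _ => EF_spec i)) _).
  exact: (eqN_trans (tr_scale _ _) (eqN_scale _ (@tr_one N))).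
have hgm : eqN N (tr N (ps_add (ps_expa m%:R) (ps_one R))) (P ^+ m + 1).
  exact: (eqN_trans (tr_add _ _) (eqN_add (tr_expa_nat _) (@tr_one N))).
have hF : eqN N (F * (P ^+ m + 1)) (2 *: 1).
  refine (eqN_trans (eqN_mul (eqN_eq (erefl F)) (eqN_sym hgm)) _).
  refine (eqN_trans (eqN_sym (tr_mul _ _)) _).
  refine (eqN_trans (tr_ext (fun i _ => F_spec _ i)) _).
  exact: (eqN_trans (tr_scale _ _) (eqN_scale _ (@tr_one N))).
have hS : S * (P + 1) = P ^+ m + 1.
  by rewrite geom_sum -signr_odd hm expr1 scaleN1r opprK addrC.
have h3 : eqN N (F * S) E.
  have e1 : F * S = 2^-1 *: ((2 *: 1) * (F * S)).
    by rewrite -scalerAl scalerA mulVf ?scale1r ?mul1r // pnatr_eq0.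
  have e2 : E = 2^-1 *: (E * (2 *: 1)).
    by rewrite -scalerAr scalerA mulVf ?scale1r ?mulr1 // pnatr_eq0.
  rewrite e1 [X in eqN _ _ X]e2; apply: eqN_scale.
  refine (eqN_trans (eqN_mul (eqN_sym hE) (eqN_eq (erefl (F * S)))) _).
  have -> : E * (P + 1) * (F * S) = E * (F * (S * (P + 1))) by ring.
  by rewrite hS; apply: eqN_mul => // i _.
have claim s : (F * (P ^+ s * X))`_l
    = (m%:R : R) ^+ l * ps_mul EF (ps_expa ((s%:R + x) / m%:R)) l.
  have e : eqN N (tr N (ps_expa (s%:R + x))) (P ^+ s * X).
    exact: (eqN_trans (tr_expa_add _ _) (eqN_mul (tr_expa_nat _) (eqN_eq (erefl X)))).
  rewrite -(eqN_mul (eqN_eq (erefl F)) e (ltnSn l)) -mul_coef_tr.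
  rewrite (@ps_mul_ext _ _ (ps_dil m%:R (ps_expa ((s%:R + x) / m%:R)))).
    by rewrite dil_mul.
  by move=> i; rewrite dil_expa mulrC divfK.
have h4 : ps_mul EF (ps_expa x) l = (F * S * X)`_l.
  rewrite mul_coef_tr; symmetry.
  exact: (eqN_mul h3 (eqN_eq (erefl X)) (ltnSn l)).
rewrite /euler_poly -/EF h4 /S mulr_sumr [F * _]mulr_sumr mulr_suml coef_sum mulr_sumr.
apply: eq_bigr => s _.
rewrite -scalerAr -scalerAl coefZ -mulrA claim; ring.
Qed.
End Aux.

Lemma comp0 (R : numFieldType) (k : int) :
  ps_comp (@ps_Ei R k) (ps_log1p R) 0 = 0.
Proof. by rewrite /ps_comp big_ord1 /= mul0r. Qed.

Lemma compS (R : numFieldType) (k : int) d :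
  ps_comp (@ps_Ei R k) (ps_log1p R) d.+1 =
  \sum_(j < d.+1) @ps_Ei R k j.+1 * ps_pow (ps_log1p R) j.+1 d.+1.
Proof. by rewrite /ps_comp big_ord_recl /= mul0r add0r. Qed.

Theorem corollary7 (R : numFieldType) (k : int) (n m : nat) (x : R) :
  (0 < n)%N -> odd m ->
  poly_euler k n.-1 x =
  \sum_(l < n)
    ('C(n.-1, l)%:R * (m%:R : R) ^+ l *
     \sum_(1 <= j < (n - l).+1) \sum_(s < m)
        ((-1) ^+ s * euler_poly l ((s%:R + x) / m%:R)
         * ((j%:R : R) ^ (k - 1))^-1
         * (stirling1 R (n - l) j / (n - l)%:R))).
Proof.
case: n => [|n] // _ hm.
rewrite /poly_euler /poly_genocchi ps_mulACA.
set C := ps_comp _ _.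
set G := ps_mul (ps_euler_factor R) (ps_expa x).
change (n.+1.-1) with n. have eM : ps_mul G C n.+1 = \sum_(i < n.+2) G i * C (n.+1 - i)%N by reflexivity.
rewrite eM big_ord_recr /= subnn /C comp0 mulr0 addr0 -/C.
rewrite mulr_sumr mulr_suml; apply: eq_bigr => l _.
have hl : (l <= n)%N by have := ltn_ord l; lia.
rewrite subSn //; set d := (n - l)%N.
have eR : \sum_(1 <= j < d.+2) \sum_(s < m)
      ((-1) ^+ s * euler_poly l ((s%:R + x) / m%:R) * ((j%:R : R) ^ (k - 1))^-1
         * (stirling1 R d.+1 j / d.+1%:R))
    = (\sum_(s < m) (-1) ^+ s * euler_poly l ((s%:R + x) / m%:R)) *
      \sum_(1 <= j < d.+2) ((j%:R : R) ^ (k - 1))^-1 * (stirling1 R d.+1 j / d.+1%:R).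
  rewrite mulr_sumr; apply: eq_bigr => j _; rewrite mulr_suml.
  by apply: eq_bigr => s _; rewrite !mulrA.
rewrite eR; set A := \sum_(s < m) _.
have eA := mult_thm x l hm; rewrite -/A in eA.
rewrite [RHS]mulrA -[_ * _ * A]mulrA eA /euler_poly -/G.
rewrite /C compS big_add1 /= big_mkord mulr_sumr mulr_sumr mulr_suml.
rewrite [RHS]mulr_sumr; apply: eq_bigr => j _.
set J := ((j.+1%:R : R) ^ (k - 1)).
have eJ : (j.+1%:R : R) ^ k = J * j.+1%:R.
  by have := @expfzDr _ (j.+1%:R : R) (k - 1) 1 (natS_neq0 _ j); rewrite subrK expr1z.
have J0 : J != 0 by rewrite expfz_neq0 // natS_neq0.
rewrite /stirling1 -/(ps_pow (ps_log1p R) j.+1) eJ !factS -(bin_fact hl) -/d !natrM.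
have := fact_neq0 R l; have := fact_neq0 R d; have := fact_neq0 R j.
have := natS_neq0 R n; have := natS_neq0 R d; have := natS_neq0 R j.
have hC : ('C(n, l)%:R : R) != 0 by rewrite pnatr_eq0 -lt0n bin_gt0.
move=> h1 h2 h3 h4 h5 h6.
field.
by rewrite !nat1r h1 h2 h3 h4 J0.
Qed.
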